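(* For all $\rho^{0},\rho^{1},\theta^{0},\theta^{1}>0$, \[ s(\rho^1,\theta^1)-s(\rho^0,\theta^0)\;\ge\;\frac{1}{\theta^1}\big(e(\rho^1,\theta^1)-e(\rho^0,\theta^0)\big)-\frac{1}{\rho^0\,\theta^1}\,\frac{p(\rho^1,\theta^1)}{\rho^1}\,\big(\rho^1-\rho^0\big). \]
   Context: Subscripts denote partial derivatives. Let $P\in C^3((0,\infty)^2)$, $P=P(\rho,\theta)$, and $Q\in C^2((0,\infty))$, $Q=Q(\theta)$, satisfy for all $\rho,\theta>0$: $P_\rho\ge0$, $(\rho P_\rho)_\rho\ge0$, $Q_\theta-\theta P_{\theta\theta}\ge\underline c_v$ for some constant $\underline c_v>0$. Define the pressure $p=\rho^2P_\rho$, the specific internal energy $e=P-\theta P_\theta+Q$, and the specific entropy $s(\rho,\theta)=\int_1^\theta\frac{Q_\theta(t)}{t}dt-P_\theta(\rho,\theta)$. *)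

(* Defs.v *)
From Stdlib Require Import Reals Lra ClassicalEpsilon.
Open Scope R_scope.

Definition cont_quad (f : R -> R -> R) : Prop :=
  forall x y, 0 < x -> 0 < y -> forall eps, 0 < eps ->
    exists del, 0 < del /\ forall x' y', 0 < x' -> 0 < y' ->
      Rabs (x' - x) < del -> Rabs (y' - y) < del ->
      Rabs (f x' y' - f x y) < eps.

Fixpoint Ck_quad (k : nat) (f : R -> R -> R) : Prop :=
  cont_quad f /\
  match k with
  | O => True
  | S k' => exists f1 f2 : R -> R -> R,
      (forall x y, 0 < x -> 0 < y ->
         derivable_pt_lim (fun r => f r y) x (f1 x y) /\
         derivable_pt_lim (fun t => f x t) y (f2 x y)) /\
      Ck_quad k' f1 /\ Ck_quad k' f2
  end.

Definition cont_pos (f : R -> R) : Prop :=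
  forall x, 0 < x -> forall eps, 0 < eps ->
    exists del, 0 < del /\ forall x', 0 < x' -> Rabs (x' - x) < del ->
      Rabs (f x' - f x) < eps.

Fixpoint Ck_pos (k : nat) (f : R -> R) : Prop :=
  cont_pos f /\
  match k with
  | O => True
  | S k' => exists f1 : R -> R,
      (forall x, 0 < x -> derivable_pt_lim f x (f1 x)) /\ Ck_pos k' f1
  end.

(* Riemann integral \int_a^b f (signed, Stdlib convention); well defined by
   proof irrelevance of RiemannInt whenever f is Riemann integrable. *)
Definition Rint (f : R -> R) (a b : R) : R :=
  epsilon (inhabits 0)
    (fun v => exists pr : Riemann_integrable f a b, RiemannInt pr = v).

(* Pressure p = rho^2 P_rho, internal energy e = P - theta P_theta + Q,
   entropy s = \int_1^theta Q_theta(t)/t dt - P_theta. *)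
Definition pressure (Pr : R -> R -> R) (rho th : R) : R := rho ^ 2 * Pr rho th.
Definition energy (P Pt : R -> R -> R) (Q : R -> R) (rho th : R) : R :=
  P rho th - th * Pt rho th + Q th.
Definition entropy (Pt : R -> R -> R) (Qt : R -> R) (rho th : R) : R :=
  Rint (fun t => Qt t / t) 1 th - Pt rho th.

(* Main.v *)
Require Import Defs.
From Stdlib Require Import Reals Lra ClassicalEpsilon.
From Coquelicot Require Import Coquelicot.
Open Scope R_scope.

Lemma loc_pos (x : R) : 0 < x -> locally x (fun t => 0 < t).
Proof.
  intros Hx. exists (mkposreal x Hx). intros t Ht.
  unfold ball in Ht; simpl in Ht; unfold AbsRing_ball, abs, minus, plus, opp in Ht; simpl in Ht.
  apply Rabs_lt_between in Ht. lra.
Qed.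

Lemma ext_deriv (f g : R -> R) x l : 0 < x -> (forall t, 0 < t -> f t = g t) ->
  derivable_pt_lim f x l -> derivable_pt_lim g x l.
Proof.
  intros Hx He Hd. apply is_derive_Reals. apply is_derive_Reals in Hd.
  apply (is_derive_ext_loc f g). 2: exact Hd.
  eapply filter_imp. 2: apply (loc_pos x Hx). intros t Ht; auto.
Qed.

Lemma deriv_eq f x l l' : derivable_pt_lim f x l -> l = l' -> derivable_pt_lim f x l'.
Proof. intros H ->; exact H. Qed.

Lemma ln_le_sub1 x : 0 < x -> ln x <= x - 1.
Proof.
  intros Hx. destruct (Req_dec x 1) as [->|Hn].
  - rewrite ln_1; lra.
  - assert (H := exp_ineq1 (x - 1) ltac:(lra)).
    assert (ln x < ln (exp (x-1))) by (apply ln_increasing; lra).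
    rewrite ln_exp in H0. lra.
Qed.

Lemma Rint_RInt (F : R -> R) a b :
  ex_RInt F a b -> Rint F a b = RInt F a b.
Proof.
  intros He. unfold Rint.
  destruct (epsilon_spec (inhabits 0)
    (fun v => exists pr : Riemann_integrable F a b, RiemannInt pr = v))
    as [pr Hpr].
  { exists (RiemannInt (ex_RInt_Reals_0 _ _ _ He)). eauto. }
  rewrite <- Hpr. symmetry. apply RInt_Reals.
Qed.

Lemma S_deriv (F : R -> R) x :
  (forall t, 0 < t -> continuous F t) -> 0 < x ->
  derivable_pt_lim (fun t => Rint F 1 t) x (F x).
Proof.
  intros Hc Hx.
  assert (Hex : forall b, 0 < b -> ex_RInt F 1 b).
  { intros b Hb. apply (@ex_RInt_continuous R_CompleteNormedModule). intros z Hz. apply Hc.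
    assert (0 < Rmin 1 b) by (apply Rmin_glb_lt; lra). lra. }
  apply (ext_deriv (fun t => RInt F 1 t)); auto.
  { intros t Ht. symmetry. apply Rint_RInt. auto. }
  apply is_derive_Reals. apply is_derive_RInt with (a := 1).
  - eapply filter_imp. 2: apply (loc_pos x Hx). intros t Ht.
    apply (@RInt_correct R_CompleteNormedModule). auto.
  - auto.
Qed.

Theorem mainTheorem8
  (P : R -> R -> R) (Q : R -> R)
  (Pr Pt Ptt : R -> R -> R) (Qt : R -> R) (cv : R)
  (HP : Ck_quad 3 P) (HQ : Ck_pos 2 Q)
  (HPr : forall rho th, 0 < rho -> 0 < th ->
           derivable_pt_lim (fun r => P r th) rho (Pr rho th))
  (HPt : forall rho th, 0 < rho -> 0 < th ->
           derivable_pt_lim (fun t => P rho t) th (Pt rho th))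
  (HPtt : forall rho th, 0 < rho -> 0 < th ->
           derivable_pt_lim (fun t => Pt rho t) th (Ptt rho th))
  (HQt : forall th, 0 < th -> derivable_pt_lim Q th (Qt th))
  (Hcv : 0 < cv)
  (H1 : forall rho th, 0 < rho -> 0 < th -> 0 <= Pr rho th)
  (H2 : forall rho th l, 0 < rho -> 0 < th ->
          derivable_pt_lim (fun r => r * Pr r th) rho l -> 0 <= l)
  (H3 : forall rho th, 0 < rho -> 0 < th -> cv <= Qt th - th * Ptt rho th)
  (rho0 rho1 th0 th1 : R)
  (Hr0 : 0 < rho0) (Hr1 : 0 < rho1) (Ht0 : 0 < th0) (Ht1 : 0 < th1) :
  entropy Pt Qt rho1 th1 - entropy Pt Qt rho0 th0 >=
    / th1 * (energy P Pt Q rho1 th1 - energy P Pt Q rho0 th0)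
    - / (rho0 * th1) * (pressure Pr rho1 th1 / rho1) * (rho1 - rho0).
Proof.
  assert (HF : forall t, 0 < t -> continuous (fun u => Qt u / u) t).
  { destruct HQ as [_ [q1 [Hq1 [_ [q2 [Hq2 _]]]]]].
    assert (Heq : forall u, 0 < u -> Qt u = q1 u).
    { intros u Hu. eapply uniqueness_limite; eauto. }
    intros t Ht.
    apply (continuous_ext_loc _ (fun u => q1 u * / u)).
    { eapply filter_imp. 2: apply (loc_pos t Ht). intros u Hu. simpl.
      unfold Rdiv. rewrite Heq; auto. }
    apply (continuous_mult q1 (fun u => / u)).
    - apply (@ex_derive_continuous R_AbsRing R_NormedModule). exists (q2 t). apply is_derive_Reals. auto.
    - apply continuous_Rinv. lra. }
  set (S := fun t => Rint (fun u => Qt u / u) 1 t).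
  set (g := fun t => th1 * (S t - Pt rho0 t) - (P rho0 t - t * Pt rho0 t + Q t)).
  assert (Hg : forall c, 0 < c -> derivable_pt_lim g c ((th1 - c) * / c * (Qt c - c * Ptt rho0 c))).
  { intros c Hc. unfold g.
    eapply deriv_eq.
    - apply derivable_pt_lim_minus.
      + apply derivable_pt_lim_mult. apply derivable_pt_lim_const.
        apply derivable_pt_lim_minus. apply (S_deriv _ c HF Hc). apply HPtt; auto.
      + apply derivable_pt_lim_plus. apply derivable_pt_lim_minus. apply HPt; auto.
        apply derivable_pt_lim_mult. apply derivable_pt_lim_id. apply HPtt; auto.
        apply HQt; auto.
    - simpl. field. lra. }
  assert (HG : g th0 <= g th1).
  { destruct (Rtotal_order th0 th1) as [Hlt|[Heq|Hgt]].
    - destruct (MVT_cor2 g (fun c => (th1 - c) * / c * (Qt c - c * Ptt rho0 c)) th0 th1 Hlt) as [c [Hc1 Hc2]].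
      { intros c Hc. apply Hg. lra. }
      assert (K := H3 rho0 c Hr0 ltac:(lra)).
      assert (0 <= (th1 - c) * / c * (Qt c - c * Ptt rho0 c)).
      { apply Rmult_le_pos. apply Rmult_le_pos. lra. left; apply Rinv_0_lt_compat; lra. lra. }
      assert (0 <= (th1 - c) * / c * (Qt c - c * Ptt rho0 c) * (th1 - th0)) by (apply Rmult_le_pos; lra).
      lra.
    - subst; lra.
    - destruct (MVT_cor2 g (fun c => (th1 - c) * / c * (Qt c - c * Ptt rho0 c)) th1 th0 Hgt) as [c [Hc1 Hc2]].
      { intros c Hc. apply Hg. lra. }
      assert (K := H3 rho0 c Hr0 ltac:(lra)).
      assert (0 <= (c - th1) * / c * (Qt c - c * Ptt rho0 c)).
      { apply Rmult_le_pos. apply Rmult_le_pos. lra. left; apply Rinv_0_lt_compat; lra. lra. }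
      assert (0 <= (c - th1) * / c * (Qt c - c * Ptt rho0 c) * (th0 - th1)) by (apply Rmult_le_pos; lra).
      assert ((th1 - c) * / c * (Qt c - c * Ptt rho0 c) * (th0 - th1) = - ((c - th1) * / c * (Qt c - c * Ptt rho0 c) * (th0 - th1))) by ring.
      lra. }
  destruct HP as [_ [f1 [f2 [Hd [[_ [g1 [g2 [Hd1 _]]]] _]]]]].
  assert (HPrf : forall r, 0 < r -> Pr r th1 = f1 r th1).
  { intros r Hr. eapply uniqueness_limite. apply HPr; auto. apply Hd; auto. }
  set (psi := fun r => r * f1 r th1).
  assert (Hpsi : forall c, 0 < c -> derivable_pt_lim psi c (f1 c th1 + c * g1 c th1)).
  { intros c Hc. unfold psi. eapply deriv_eq.
    apply derivable_pt_lim_mult. apply derivable_pt_lim_id. apply Hd1; auto.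
    unfold id; ring. }
  assert (Hpsi' : forall c, 0 < c -> 0 <= f1 c th1 + c * g1 c th1).
  { intros c Hc. apply (H2 c th1); auto.
    apply (ext_deriv psi); auto. intros t Ht. unfold psi. rewrite HPrf; auto. }
  assert (Hmono : forall u v, 0 < u -> u <= v -> psi u <= psi v).
  { intros u v Hu Huv. destruct Huv as [Hlt|<-]; [|lra].
    destruct (MVT_cor2 psi (fun c => f1 c th1 + c * g1 c th1) u v Hlt) as [c [Hc1 Hc2]].
    { intros c Hc. apply Hpsi. lra. }
    assert (0 <= (f1 c th1 + c * g1 c th1) * (v - u)).
    { apply Rmult_le_pos. apply Hpsi'; lra. lra. }
    lra. }
  set (a := rho1 * Pr rho1 th1).
  assert (Ha : psi rho1 = a) by (unfold psi, a; rewrite HPrf; auto).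
  assert (Ha0 : 0 <= a) by (unfold a; apply Rmult_le_pos; [lra| apply H1; auto]).
  set (phi := fun r => P r th1 - a * ln r).
  assert (Hphi : forall c, 0 < c -> derivable_pt_lim phi c ((psi c - a) * / c)).
  { intros c Hc. unfold phi. eapply deriv_eq.
    apply derivable_pt_lim_minus. apply HPr; auto.
    apply derivable_pt_lim_mult. apply derivable_pt_lim_const. apply derivable_pt_lim_ln; auto.
    unfold psi. rewrite <- HPrf by auto. field. lra. }
  assert (HR : P rho1 th1 - P rho0 th1 <= a * (ln rho1 - ln rho0)).
  { destruct (Rtotal_order rho0 rho1) as [Hlt|[Heq|Hgt]].
    - destruct (MVT_cor2 phi (fun c => (psi c - a) * / c) rho0 rho1 Hlt) as [c [Hc1 Hc2]].
      { intros c Hc. apply Hphi. lra. }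
      assert (psi c <= psi rho1) by (apply Hmono; lra).
      assert (0 <= (a - psi c) * / c * (rho1 - rho0)).
      { apply Rmult_le_pos. apply Rmult_le_pos. lra. left; apply Rinv_0_lt_compat; lra. lra. }
      unfold phi in Hc1.
      assert ((psi c - a) * / c * (rho1 - rho0) = - ((a - psi c) * / c * (rho1 - rho0))) by ring.
      lra.
    - subst; lra.
    - destruct (MVT_cor2 phi (fun c => (psi c - a) * / c) rho1 rho0 Hgt) as [c [Hc1 Hc2]].
      { intros c Hc. apply Hphi. lra. }
      assert (psi rho1 <= psi c) by (apply Hmono; lra).
      assert (0 <= (psi c - a) * / c * (rho0 - rho1)).
      { apply Rmult_le_pos. apply Rmult_le_pos. lra. left; apply Rinv_0_lt_compat; lra. lra. }
      unfold phi in Hc1. lra. }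
  assert (Hln : ln rho1 - ln rho0 <= rho1 / rho0 - 1).
  { rewrite <- ln_div by auto. apply ln_le_sub1. apply Rdiv_lt_0_compat; auto. }
  assert (HR2 : P rho1 th1 - P rho0 th1 <= a * (rho1 / rho0 - 1)).
  { assert (a * (ln rho1 - ln rho0) <= a * (rho1 / rho0 - 1)) by (apply Rmult_le_compat_l; auto). lra. }
  unfold g, S in HG. unfold entropy, energy, pressure.
  fold a in HR2 |- *.
  set (S1 := Rint (fun u => Qt u / u) 1 th1) in *.
  set (S0 := Rint (fun u => Qt u / u) 1 th0) in *.
  assert (E : / (rho0 * th1) * (rho1 ^ 2 * Pr rho1 th1 / rho1) * (rho1 - rho0)
             = / th1 * (a * (rho1 / rho0 - 1))).
  { unfold a. field. lra. }
  rewrite E.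
  apply Rle_ge. apply Rmult_le_reg_l with th1; auto.
  assert (E2 : forall X, th1 * (/ th1 * X) = X) by (intros; field; lra).
  rewrite Rmult_minus_distr_l, E2, E2.
  lra.
Qed.
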